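(* Let $A$ be a Noetherian ring, $I$ an ideal of $A$ with system of generators $(y_1,\ldots,y_m)$, and $\hat A$ the $I$-adic completion of $A$. Let $B$ be a subring of $A$ such that $y_1,\ldots,y_m\in B$ and $y_1,\ldots,y_m$ generate the ideal $B\cap I$ of $B$. Then, in $\hat A$, every element $f\in B$ can be written as $$f=\sum_{\beta\in\mathbb{Z}^m_{\geqslant0}}c_\beta\,y^\beta$$ with all coefficients $c_\beta\in((A\setminus I)\cap B)\cup\{0\}$.
   Context: $y^\beta=y_1^{\beta_1}\cdots y_m^{\beta_m}$; the series converges $I$-adically in $\hat A$. *)

(* Defs.v *)
From HB Require Import structures.
From mathcomp Require Import all_boot all_order all_algebra.
Set Implicit Arguments. Unset Strict Implicit. Unset Printing Implicit Defensive.
Import Order.TTheory GRing.Theory Num.Theory.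
Local Open Scope ring_scope.

Definition lincomb_in (A : comNzRingType) (R G : A -> Prop) (x : A) : Prop :=
  exists s : seq (A * A),
    (forall p, p \in s -> R p.1 /\ G p.2) /\ x = \sum_(p <- s) p.1 * p.2.

Definition idealgen (A : comNzRingType) (G : A -> Prop) : A -> Prop :=
  lincomb_in (fun _ => True) G.

Definition is_ideal (A : comNzRingType) (J : A -> Prop) : Prop :=
  J 0 /\ (forall x y, J x -> J y -> J (x + y)) /\ (forall a x, J x -> J (a * x)).

Definition noetherian (A : comNzRingType) : Prop :=
  forall J : A -> Prop, is_ideal J ->
    exists s : seq A, forall x, J x <-> idealgen (fun g => g \in s) x.

Definition is_subring (A : comNzRingType) (B : A -> Prop) : Prop :=
  B 1 /\ (forall x y, B x -> B y -> B (x - y)) /\ (forall x y, B x -> B y -> B (x * y)).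

Definition idealmul (A : comNzRingType) (I J : A -> Prop) : A -> Prop :=
  idealgen (fun z => exists a b, I a /\ J b /\ z = a * b).

Definition idealpow (A : comNzRingType) (I : A -> Prop) (n : nat) : A -> Prop :=
  iter n (idealmul I) (fun _ => True).

Definition multiindex (m : nat) := {ffun 'I_m -> nat}.

Definition mdeg (m : nat) (b : multiindex m) : nat := (\sum_(i < m) b i)%N.

Definition mono (A : comNzRingType) (m : nat) (y : 'I_m -> A) (b : multiindex m) : A :=
  \prod_(i < m) y i ^+ b i.

(* The family (u_beta) is summable with sum f in the I-adic topology, i.e.
   sum_beta u_beta = f holds in the I-adic completion of A: for every n there is
   N such that every finite partial sum containing all beta with |beta| < N
   differs from f by an element of I^n. *)
Definition Iadic_sum (A : comNzRingType) (I : A -> Prop) (m : nat)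
    (u : multiindex m -> A) (f : A) : Prop :=
  forall n : nat, exists N : nat, forall S : seq (multiindex m),
    uniq S -> (forall b, (mdeg b < N)%N -> b \in S) ->
    idealpow I n (f - \sum_(b <- S) u b).

(* Main.v *)
From Stdlib Require Import ClassicalEpsilon.
Require Import Defs.
From HB Require Import structures.
From mathcomp Require Import all_boot all_order all_algebra.
Import GRing.Theory.
Set Implicit Arguments. Unset Strict Implicit.
Local Open Scope ring_scope.

Lemma idealgen_ideal (A : comNzRingType) (G : A -> Prop) : is_ideal (idealgen G).
Proof.
split; first by exists [::]; split => //; rewrite big_nil.
split.
- move=> x y [s [Hs ->]] [t [Ht ->]]; exists (s ++ t); split; last by rewrite big_cat.
  by move=> p; rewrite mem_cat => /orP [] ?; [apply: Hs | apply: Ht].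
- move=> a x [s [Hs ->]]; exists [seq (a * p.1, p.2) | p <- s]; split.
  + by move=> p /mapP [q qs ->] /=; split => //; exact: (Hs q qs).2.
  + by rewrite big_map big_distrr /=; apply: eq_bigr => p _; rewrite mulrA.
Qed.

Lemma idealgen_gen (A : comNzRingType) (G : A -> Prop) x : G x -> idealgen G x.
Proof.
move=> Gx; exists [:: (1, x)]; split; last by rewrite big_seq1 mul1r.
by move=> p; rewrite inE => /eqP -> .
Qed.

Lemma idealgen_mono (A : comNzRingType) (G H : A -> Prop) :
  (forall x, G x -> H x) -> forall x, idealgen G x -> idealgen H x.
Proof.
move=> GH x [s [Hs ->]]; exists s; split => // p ps.
by have [_ ?] := Hs p ps; split => //; apply: GH.
Qed.

Lemma ideal_sum (A : comNzRingType) (J : A -> Prop) (T : eqType) (r : seq T) (F : T -> A) :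
  is_ideal J -> (forall i, i \in r -> J (F i)) -> J (\sum_(i <- r) F i).
Proof.
move=> [J0 [JD JM]]; elim: r => [|x r IH] H; first by rewrite big_nil.
rewrite big_cons; apply: JD; first by apply: H; rewrite inE eqxx.
by apply: IH => i ir; apply: H; rewrite inE ir orbT.
Qed.

Lemma ideal_sub (A : comNzRingType) (J : A -> Prop) x y :
  is_ideal J -> J x -> J y -> J (x - y).
Proof.
move=> [J0 [JD JM]] Jx Jy; apply: JD => //.
by rewrite -mulN1r; apply: JM.
Qed.

Lemma idealpow_ideal (A : comNzRingType) (I : A -> Prop) n : is_ideal (idealpow I n).
Proof. by case: n => [|n] /=; [do !split | exact: idealgen_ideal]. Qed.

Lemma idealpow_S (A : comNzRingType) (I : A -> Prop) n x :
  idealpow I n.+1 x -> idealpow I n x.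
Proof.
elim: n x => [|n IH] x //=.
apply: idealgen_mono => z [a [b [Ia [Jb ->]]]].
by exists a, b; split => //; split => //; apply: IH.
Qed.

Lemma idealpow_le (A : comNzRingType) (I : A -> Prop) n k x :
  (n <= k)%N -> idealpow I k x -> idealpow I n x.
Proof.
elim: k x => [|k IH] x; first by rewrite leqn0 => /eqP ->.
rewrite leq_eqVlt => /orP [/eqP -> //|]; rewrite ltnS => nk Jx.
by apply: IH => //; apply: idealpow_S.
Qed.

Lemma idealpow_mulI (A : comNzRingType) (I : A -> Prop) n a x :
  I a -> idealpow I n x -> idealpow I n.+1 (a * x).
Proof. by move=> Ia Jx; apply: idealgen_gen; exists a, x. Qed.

Lemma idealpow_mul (A : comNzRingType) (I : A -> Prop) n a x :
  idealpow I n x -> idealpow I n (a * x).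
Proof. by have [_ [_ JM]] := idealpow_ideal I n; apply: JM. Qed.

Lemma idealpow_exp (A : comNzRingType) (I : A -> Prop) n k a x :
  I a -> idealpow I n x -> idealpow I (k + n) (a ^+ k * x).
Proof.
move=> Ia Jx; elim: k => [|k IH]; first by rewrite expr0 mul1r.
by rewrite exprS -mulrA addSn; apply: idealpow_mulI.
Qed.

Lemma idealpow_prod (A : comNzRingType) (I : A -> Prop) m (y : 'I_m -> A)
  (b : multiindex m) (r : seq 'I_m) :
  (forall i, I (y i)) ->
  idealpow I (\sum_(i <- r) b i)%N (\prod_(i <- r) y i ^+ b i).
Proof.
move=> Iy; elim: r => [|j r IH]; first by rewrite !big_nil.
by rewrite !big_cons; apply: idealpow_exp.
Qed.

Lemma idealpow_mono (A : comNzRingType) (I : A -> Prop) m (y : 'I_m -> A)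
  (b : multiindex m) : (forall i, I (y i)) -> idealpow I (mdeg b) (mono y b).
Proof. exact: idealpow_prod. Qed.
Lemma sub0 (A : comNzRingType) (B : A -> Prop) : is_subring B -> B 0.
Proof. rewrite /is_subring => -[B1 [BB _]]; rewrite -(subrr 1); exact: BB. Qed.

Lemma subD (A : comNzRingType) (B : A -> Prop) x y : is_subring B -> B x -> B y -> B (x + y).
Proof.
move=> hB Bx By; case: (hB) => _ [BB _].
rewrite -[y]opprK -[- y]sub0r; apply: (BB) => //; apply: (BB) => //; exact: sub0.
Qed.

Lemma subsum (A : comNzRingType) (B : A -> Prop) (T : Type) (r : seq T) (F : T -> A) :
  is_subring B -> (forall i, B (F i)) -> B (\sum_(i <- r) F i).
Proof.
move=> hB H; elim: r => [|x r IH]; first by rewrite big_nil; exact: sub0.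
by rewrite big_cons; apply: subD.
Qed.

Lemma coef_exists (A : comNzRingType) m (y : 'I_m -> A) (B : A -> Prop) x :
  is_subring B -> lincomb_in B (fun g => exists i, g = y i) x ->
  exists a : 'I_m -> A, (forall i, B (a i)) /\ x = \sum_i a i * y i.
Proof.
move=> hB [s [Hs ->]]; elim: s Hs => [|p s IH] Hs.
  exists (fun _ => 0); split; first by move=> _; exact: sub0.
  by rewrite big_nil big1 // => i _; rewrite mul0r.
have [Bp [i Hi]] := Hs p (mem_head _ _); rewrite big_cons.
have [a [Ba ->]] : exists a : 'I_m -> A, (forall i, B (a i)) /\
    \sum_(q <- s) q.1 * q.2 = \sum_i a i * y i.
  by apply: IH => q qs; apply: Hs; rewrite inE qs orbT.
exists (fun j => a j + (if j == i then p.1 else 0)); split.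
  by move=> j; apply: subD => //; case: eqP => _ //; exact: sub0.
rewrite [RHS](eq_bigr (fun j => a j * y j + (if j == i then p.1 else 0) * y j)); last by move=> j _ /=; rewrite mulrDl.
rewrite big_split /= addrC; congr (_ + _).
rewrite (bigD1 i) //= eqxx big1 ?addr0 ?Hi //.
by move=> j /negPf ->; rewrite mul0r.
Qed.

Definition acoef (A : comNzRingType) m (y : 'I_m -> A) (B : A -> Prop) (x : A) : 'I_m -> A :=
  match excluded_middle_informative
    (exists a : 'I_m -> A, (forall i, B (a i)) /\ x = \sum_i a i * y i) with
  | left H => proj1_sig (constructive_indefinite_description _ H)
  | right _ => fun _ => 0
  end.

Lemma acoefP (A : comNzRingType) m (y : 'I_m -> A) (B : A -> Prop) (x : A) :
  (exists a : 'I_m -> A, (forall i, B (a i)) /\ x = \sum_i a i * y i) ->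
  (forall i, B (acoef y B x i)) /\ x = \sum_i acoef y B x i * y i.
Proof.
rewrite /acoef; case: excluded_middle_informative => // H _.
by case: constructive_indefinite_description.
Qed.

Definition inI (A : Type) (I : A -> Prop) (x : A) : bool :=
  if excluded_middle_informative (I x) then true else false.

Lemma inIP (A : Type) (I : A -> Prop) (x : A) : reflect (I x) (inI I x).
Proof. by rewrite /inI; case: excluded_middle_informative => H; constructor. Qed.

Definition mi_of m k (g : {ffun 'I_m -> 'I_k.+1}) : multiindex m :=
  [ffun i => nat_of_ord (g i)].

Definition low m k (P : pred (multiindex m)) : seq (multiindex m) :=
  [seq b <- [seq mi_of g | g <- enum {ffun 'I_m -> 'I_k.+1}] | P b].

Lemma low_uniq m k P : uniq (@low m k P).
Proof.
rewrite filter_uniq // map_inj_uniq ?enum_uniq // => g1 g2 H.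
apply/ffunP => i; apply/val_inj; move/ffunP/(_ i): H; by rewrite !ffunE.
Qed.

Lemma mem_low m k (P : pred (multiindex m)) b :
  (forall b, P b -> forall i, (b i <= k)%N) -> (b \in low k P) = P b.
Proof.
move=> H; rewrite mem_filter; case Pb: (P b) => //=.
apply/mapP; exists [ffun i => inord (b i)]; first by rewrite mem_enum.
by apply/ffunP => i; rewrite !ffunE inordK // ltnS; apply: H.
Qed.

Lemma le_mdeg m (b : multiindex m) i : (b i <= mdeg b)%N.
Proof. by rewrite /mdeg (bigD1 i) //= leq_addr. Qed.

Definition Dg m d := @low m d (fun b => mdeg b == d).
Definition Lw m d := @low m d (fun b => (mdeg b < d)%N).

Lemma mem_Dg m d b : (b \in @Dg m d) = (mdeg b == d).
Proof. by rewrite mem_low // => c /eqP <- i; apply: le_mdeg. Qed.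

Lemma mem_Lw m d b : (b \in @Lw m d) = (mdeg b < d)%N.
Proof. by rewrite mem_low // => c H i; apply: leq_trans (le_mdeg c i) (ltnW H). Qed.

Lemma sum_Lw_S (A : comNzRingType) m d (F : multiindex m -> A) :
  \sum_(b <- Lw m d.+1) F b = \sum_(b <- Lw m d) F b + \sum_(b <- Dg m d) F b.
Proof.
rewrite -big_cat; apply: perm_big; apply: uniq_perm.
- exact: low_uniq.
- rewrite cat_uniq !low_uniq andbT /=; apply/hasPn => b.
  by rewrite mem_Dg mem_Lw => /eqP ->; rewrite ltnn.
- by move=> b; rewrite mem_cat mem_Dg !mem_Lw ltnS leq_eqVlt orbC.
Qed.

Lemma sum_if_eq (A : comNzRingType) (T : eqType) (s : seq T) x (g : T -> A) :
  uniq s -> x \in s -> \sum_(t <- s) (if t == x then g t else 0) = g x.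
Proof.
move=> us xs; rewrite (big_rem x) //= eqxx big1_seq ?addr0 // => t /= ts.
case: eqP => // tx; move: ts; rewrite tx.
by rewrite mem_rem_uniqF.
Qed.

Definition mi0 m : multiindex m := [ffun _ => 0%N].
Definition addi m (b : multiindex m) (i : 'I_m) : multiindex m :=
  [ffun j => (b j + (j == i))%N].

Lemma mdeg_addi m (b : multiindex m) i : mdeg (addi b i) = (mdeg b).+1.
Proof.
rewrite /mdeg; under eq_bigr do rewrite ffunE.
rewrite big_split /= -addn1; congr (_ + _)%N.
rewrite (bigD1 i) //= eqxx big1 ?addn0 //.
by move=> j /negPf ->.
Qed.

Lemma mono_addi (A : comNzRingType) m (y : 'I_m -> A) (b : multiindex m) i :
  mono y (addi b i) = mono y b * y i.
Proof.
rewrite /mono; under eq_bigr do rewrite ffunE exprD.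
rewrite big_split /=; congr (_ * _).
rewrite (bigD1 i) //= eqxx expr1 big1 ?mulr1 //.
by move=> j /negPf ->; rewrite expr0.
Qed.

Lemma mdeg0 m : mdeg (mi0 m) = 0%N.
Proof. by rewrite /mdeg big1 // => i _; rewrite ffunE. Qed.

Lemma mono0 (A : comNzRingType) m (y : 'I_m -> A) : mono y (mi0 m) = 1.
Proof. by rewrite /mono big1 // => i _; rewrite ffunE expr0. Qed.

Definition acf (A : comNzRingType) m (y : 'I_m -> A) (B I : A -> Prop) (x : A) (i : 'I_m) : A :=
  if inI I x then acoef y B x i else 0.

Fixpoint Rf (A : comNzRingType) m (y : 'I_m -> A) (B I : A -> Prop) (f : A) (d : nat)
  : multiindex m -> A :=
  match d with
  | 0 => fun b => if b == mi0 m then f else 0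
  | d'.+1 => fun g => \sum_(b <- Dg m d') \sum_(i < m)
        (if g == addi b i then acf y B I (Rf y B I f d' b) i else 0)
  end.

Definition cf (A : comNzRingType) m (y : 'I_m -> A) (B I : A -> Prop) (f : A)
  (b : multiindex m) : A :=
  if inI I (Rf y B I f (mdeg b) b) then 0 else Rf y B I f (mdeg b) b.

Lemma acf_spec (A : comNzRingType) m (y : 'I_m -> A) (B I : A -> Prop) x :
  is_subring B ->
  (forall x, B x -> I x -> lincomb_in B (fun g => exists i, g = y i) x) ->
  B x ->
  (forall i, B (acf y B I x i)) /\
  (if inI I x then x else 0) = \sum_i acf y B I x i * y i.
Proof.
move=> hB hBI Bx; rewrite /acf; case: inIP => Ix.
  by apply: acoefP; apply: coef_exists => //; apply: hBI.
split; first by move=> _; exact: sub0.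
by rewrite big1 // => i _; rewrite mul0r.
Qed.

Lemma RfB (A : comNzRingType) m (y : 'I_m -> A) (B I : A -> Prop) f :
  is_subring B ->
  (forall x, B x -> I x -> lincomb_in B (fun g => exists i, g = y i) x) ->
  B f -> forall d b, B (Rf y B I f d b).
Proof.
move=> hB hBI Bf; elim=> [|d IH] b /=.
  by case: eqP => _ //; exact: sub0.
apply: subsum => // c; apply: subsum => // i.
case: eqP => _; last exact: sub0.
by have [H _] := acf_spec (I:=I) hB hBI (IH c); apply: H.
Qed.

Lemma exch_step (A : comNzRingType) m (y : 'I_m -> A) (s s' : seq (multiindex m))
  (a : multiindex m -> 'I_m -> A) :
  uniq s' -> (forall b i, b \in s -> addi b i \in s') ->
  \sum_(g <- s') (\sum_(b <- s) \sum_(i < m) (if g == addi b i then a b i else 0)) * mono y g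
  = \sum_(b <- s) \sum_(i < m) a b i * mono y (addi b i).
Proof.
move=> us' Hs.
transitivity (\sum_(g <- s') \sum_(b <- s) \sum_(i < m)
   (if g == addi b i then a b i * mono y g else 0)).
  apply: eq_bigr => g _; rewrite big_distrl; apply: eq_bigr => b _.
  rewrite big_distrl; apply: eq_bigr => i _ /=.
  by case: eqP => _; rewrite ?mul0r.
rewrite exchange_big; apply: eq_big_seq => b bs; rewrite exchange_big.
apply: eq_bigr => i _ /=.
rewrite (sum_if_eq (fun t => a b i * mono y t)) //. by apply: Hs.
Qed.

Lemma Rf_step (A : comNzRingType) m (y : 'I_m -> A) (B I : A -> Prop) f d :
  is_subring B ->
  (forall x, B x -> I x -> lincomb_in B (fun g => exists i, g = y i) x) ->
  B f ->
  \sum_(b <- Dg m d) Rf y B I f d b * mono y b =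
  \sum_(b <- Dg m d) cf y B I f b * mono y b +
  \sum_(b <- Dg m d.+1) Rf y B I f d.+1 b * mono y b.
Proof.
move=> hB hBI Bf.
rewrite /= (exch_step _ (fun b i => acf y B I (Rf y B I f d b) i)); first last.
- by move=> b i; rewrite !mem_Dg mdeg_addi => /eqP ->.
- exact: low_uniq.
rewrite -big_split; apply: eq_big_seq => b; rewrite mem_Dg => /eqP Hb /=.
have [_ H] := acf_spec (I:=I) hB hBI (RfB (I:=I) hB hBI Bf d b).
transitivity (cf y B I f b * mono y b +
   (if inI I (Rf y B I f d b) then Rf y B I f d b else 0) * mono y b).
  by rewrite /cf Hb; case: ifP => _; rewrite ?mul0r ?add0r ?addr0.
congr (_ + _); rewrite H big_distrl; apply: eq_bigr => i _ /=.
by rewrite mono_addi -!mulrA [y i * _]mulrC.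
Qed.

Lemma Rf_inv (A : comNzRingType) m (y : 'I_m -> A) (B I : A -> Prop) f :
  is_subring B ->
  (forall x, B x -> I x -> lincomb_in B (fun g => exists i, g = y i) x) ->
  B f -> forall d,
  f = \sum_(b <- Lw m d) cf y B I f b * mono y b +
      \sum_(b <- Dg m d) Rf y B I f d b * mono y b.
Proof.
move=> hB hBI Bf; elim=> [|d IH].
  rewrite big1_seq ?add0r; last by move=> b /andP [_]; rewrite mem_Lw ltn0.
  rewrite (eq_bigr (fun b => if b == mi0 m then f * mono y b else 0)); last first.
    by move=> b _ /=; case: eqP; rewrite ?mul0r.
  rewrite (sum_if_eq (fun b => f * mono y b)) ?mono0 ?mulr1 //; first exact: low_uniq.
  by rewrite mem_Dg mdeg0.
by rewrite sum_Lw_S -addrA -Rf_step.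
Qed.

Theorem mainTheorem18 (A : comNzRingType) (m : nat) (y : 'I_m -> A)
    (I B : A -> Prop) :
  noetherian A ->
  (forall x, I x <-> idealgen (fun g => exists i, g = y i) x) ->
  is_subring B ->
  (forall i, B (y i)) ->
  (forall x, (B x /\ I x) <-> lincomb_in B (fun g => exists i, g = y i) x) ->
  forall f : A, B f ->
    exists c : multiindex m -> A,
      (forall b, c b = 0 \/ (~ I (c b) /\ B (c b))) /\
      Iadic_sum I (fun b => c b * mono y b) f.
Proof.
move=> _ hI hB By hBI0 f Bf.
have Iy : forall i, I (y i) by move=> i; apply/hI; apply: idealgen_gen; exists i.
have hBI : forall x, B x -> I x -> lincomb_in B (fun g => exists i, g = y i) x.
  by move=> x Bx Ix; apply/hBI0.
exists (cf y B I f); split.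
  move=> b; rewrite /cf; case: inIP => H; [by left | right; split => //].
  exact: RfB.
move=> n; exists n => S uS HS.
rewrite (bigID (fun b => (mdeg b < n)%N)) /=.
have -> : \sum_(b <- S | (mdeg b < n)%N) cf y B I f b * mono y b =
          \sum_(b <- Lw m n) cf y B I f b * mono y b.
  rewrite -big_filter; apply: perm_big; apply: uniq_perm.
  - exact: filter_uniq.
  - exact: low_uniq.
  - move=> b; rewrite mem_filter mem_Lw; case H: (mdeg b < n)%N => //=; exact: HS.
rewrite {1}(Rf_inv (I:=I) hB hBI Bf n) opprD addrACA subrr add0r.
apply: ideal_sub; first exact: idealpow_ideal.
  apply: ideal_sum; first exact: idealpow_ideal.
  move=> b; rewrite mem_Dg => /eqP <-; apply: idealpow_mul; exact: idealpow_mono.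
rewrite -big_filter; apply: ideal_sum; first exact: idealpow_ideal.
move=> b; rewrite mem_filter => /andP [H _]; apply: idealpow_mul.
apply: (@idealpow_le _ _ _ (mdeg b)); first by rewrite leqNgt.
exact: idealpow_mono.
Qed.
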